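(* Assume (A0). Let $(s,t) \in \Delta_J$ and $f \in Y_1$. Then on $\Omega$, for every $\epsilon\in(0,1]$, \[ V_\epsilon(s,t)f=f+\int_s^t V_\epsilon(s,u)A_{x (u^{1/\epsilon,s})}(u)f\, du+\sum_{k=1}^{N_s (t^{1/\epsilon,s})} V_\epsilon(s,T_k^{\epsilon,s}(s)^-) [D^\epsilon(x_{k-1}(s),x_k(s))-I]f , \] where $V_\epsilon(s,r^-)f=\lim_{u\uparrow r}V_\epsilon(s,u)f$.
   Context: Banach spaces: $(Y,\|\cdot\|)$ real separable, $(Y_1,\|\cdot\|_{Y_1})$ real separable continuously embedded in $Y$. $J$ is $\mathbb{R}^+$ or $[0,T_\infty]$, $\Delta_J=\{(s,t)\in J^2:s\le t\}$, $J(s)=\{t\in J:t\ge s\}$. An inhomogeneous $Y$-semigroup is $\Gamma:\Delta_J\to\mathcal B(Y)$ with $\Gamma(t,t)=I$, $\Gamma(s,r)\Gamma(r,t)=\Gamma(s,t)$; its generator $A_\Gamma(t)f$ is the common value of $\lim_{h\downarrow0}h^{-1}(\Gamma(t,t+h)-I)f$ and $\lim_{h\downarrow0}h^{-1}(\Gamma(t-h,t)-I)f$ on the set $\mathcal D(A_\Gamma(t))$ where both exist and agree, $\mathcal D(A_\Gamma)=\bigcap_t\mathcal D(A_\Gamma(t))$. $\Gamma$ is regular if $Y_1\subseteq\mathcal D(A_\Gamma)$, $\Gamma(s,t)Y_1\subseteq Y_1$ and $u\mapsto\Gamma(u,t)f$ is $\|\cdot\|_{Y_1}$-continuous for $f\in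 Y_1$, $u\mapsto\Gamma(s,u)f$ is $Y$-continuous for $f\in Y$, and $u\mapsto\Gamma(s,u)A_\Gamma(u)f$ is Bochner integrable on $[s,t]$ for $f\in Y_1$. Probabilistic setting: $(\Omega,\mathcal F,\mathbb P)$ complete; $X$ finite; $(x_n,T_n)_{n\ge0}$ a Markov renewal process ($x_n\in X$, $T_0=0<T_1<\dots$) with semi-Markov kernel $Q$; $N(t)=\sup\{n:T_n\le t\}$ (finite everywhere after restricting $\Omega$ to a full-measure event); $x(t)=x_{N(t)}$; $N_s(t)=N(t)-N(s)$, $T_0(s)=s$, $T_n(s)=T_{N(s)+n}$ ($n\ge1$), $x_n(s)=x(T_n(s))$. $(\Gamma_x)_{x\in X}$ are inhomogeneous $Y$-semigroups with generators $A_x$ (jointly measurable in $(r,t,x,f)$). $(D^\epsilon(x,y))_{x,y\in X,\epsilon\in(0,1]}\subseteq\mathcal B(Y)$ with $(x,y,f)\mapsto D^\epsilon(x,y)f$ measurable, and $D^0(x,y):=I$. $\mathcal D(D_1)$ is the set of $f\in Y$ such that for all $\epsilon\in[0,1]$, $x,y$, the derivative $D^\epsilon_1(x,y)f:=\lim_{h\to0,\epsilon+h\in[0,1]}h^{-1}(D^{\epsilon+h}(x,y)f-D^\epsilon(x,y)f)$ exists in $Y$; $\mathcal D(D_2)$, $D^\epsilon_2$ likewise for the second derivative in $\epsilon$. For $f\in\bigcap_x\mathcal D(A_x)$ with $A_x(t)f\in Y_1$ for all $t$, $A'_x(t)f$ denotes the $\|\cdot\|_{Y_1}$-limit of $h^{-1}(A_x(t+h)f-A_x(t)f)$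 and $\mathcal D(A'_x)$ the set where it exists in $Y_1$ for all $t$. (A0) is the following set of assumptions: (a) $Y_1\subseteq\mathcal D(D_1)$; (b) every $\Gamma_x$ is regular; (c) for every $x$ and $f\in Y_1$, $t\mapsto A_x(t)f$ is continuous into $Y$; (d) there is $\bar\tau>0$ with $Q(x,y,(\bar\tau,\infty))=0$ for all $x,y$; (e) all $\Gamma_x(s,t)$ and $D^\epsilon(x,y)$ have $\mathcal B(Y)$-norm at most $1$; (f) $A_x(t)\in\mathcal B(Y_1,Y)$ and $\sup_{u\in J}\|A_x(u)\|_{\mathcal B(Y_1,Y)}<\infty$ for all $x$; (g) $\sup_{u,x}\|A'_x(u)f\|<\infty$ and $\sup_{u,x}\|A_x(u)f\|_{Y_1}<\infty$ for all $f\in\bigcap_x\mathcal D(A'_x)$; (h) $\sup_{\epsilon\in[0,1],x,y}\|D^\epsilon_1(x,y)f\|<\infty$ for $f\in\mathcal D(D_1)$; (i) $\sup_{\epsilon\in[0,1],x,y}\|D^\epsilon_2(x,y)f\|<\infty$ for $f\in\mathcal D(D_2)$. With $t^{\epsilon,s}=s+\epsilon(t-s)$ (so $t^{1/\epsilon,s}=s+(t-s)/\epsilon$) and $T^{\epsilon,s}_k(s)=s+\epsilon(T_k(s)-s)$, $V_\epsilon(s,t)=\big[\prod_{k=1}^{N_s(t^{1/\epsilon,s})}\Gamma_{x_{k-1}(s)}(T^{\epsilon,s}_{k-1}(s),T^{\epsilon,s}_k(s))D^\epsilon(x_{k-1}(s),x_k(s))\big]\Gamma_{x(t^{1/\epsilon,s})}(T^{\epsilon,s}_{N_s(t^{1/\epsilon,s})}(s),t)$,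 product ordered left to right, empty product $I$. *)

(* Defs.v *)
From Stdlib Require Import Reals List.
From Coquelicot Require Import Coquelicot.
Open Scope R_scope.

Section Defs.
Context {Y Y1 : CompleteNormedModule R_AbsRing}.

Definition separable (Z : NormedModule R_AbsRing) : Prop :=
  exists d : nat -> Z, forall z eps, 0 < eps -> exists n, norm (minus z (d n)) < eps.

Definition cont_embedding (iota : Y1 -> Y) : Prop :=
  is_linear iota /\ (forall f g, iota f = iota g -> f = g).

Definition time_domain (J : R -> Prop) : Prop :=
  (forall t, J t <-> 0 <= t) \/
  (exists Tinf, 0 < Tinf /\ forall t, J t <-> 0 <= t <= Tinf).

Definition inhom_semigroup (J : R -> Prop) (G : R -> R -> Y -> Y) : Prop :=
  (forall s t, J s -> J t -> s <= t -> is_linear (G s t)) /\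
  (forall t f, J t -> G t t f = f) /\
  (forall s r t f, J s -> J r -> J t -> s <= r -> r <= t -> G s r (G r t f) = G s t f).

Definition gen_lim (J : R -> Prop) (G : R -> R -> Y -> Y) (t : R) (f g : Y) : Prop :=
  filterlim (fun h => scal (/ h) (minus (G t (t + h) f) f))
    (within (fun h => J (t + h)) (at_right 0)) (locally g) /\
  filterlim (fun h => scal (/ h) (minus (G (t - h) t f) f))
    (within (fun h => J (t - h)) (at_right 0)) (locally g).

Definition in_gen_dom J G t f : Prop := exists g, gen_lim J G t f g.

Definition is_generator J G (A : R -> Y -> Y) : Prop :=
  forall t f g, J t -> gen_lim J G t f g -> A t f = g.

Definition regular (J : R -> Prop) (iota : Y1 -> Y) (G : R -> R -> Y -> Y)
  (A : R -> Y -> Y) : Prop :=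
  (forall t f, J t -> in_gen_dom J G t (iota f)) /\
  (forall s t f, J s -> J t -> s <= t -> exists g, G s t (iota f) = iota g) /\
  (forall t (f : Y1), J t -> exists phi : R -> Y1,
      (forall u, J u -> u <= t -> iota (phi u) = G u t (iota f)) /\
      (forall u, J u -> u <= t ->
         filterlim phi (within (fun v => J v /\ v <= t) (locally u)) (locally (phi u)))) /\
  (forall s (f : Y) u, J s -> J u -> s <= u ->
      filterlim (fun v => G s v f) (within (fun v => J v /\ s <= v) (locally u))
        (locally (G s u f))) /\
  (forall s t f, J s -> J t -> s <= t -> ex_RInt (fun u => G s u (A u (iota f))) s t).

Definition deriv01 (phi : R -> Y) (eps : R) (g : Y) : Prop :=
  filterlim (fun h => scal (/ h) (minus (phi (eps + h)) (phi eps)))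
    (within (fun h => 0 <= eps + h <= 1) (locally' 0)) (locally g).

Definition inD1 {X : Type} (D : R -> X -> X -> Y -> Y) (f : Y) : Prop :=
  forall eps x y, 0 <= eps <= 1 -> exists g, deriv01 (fun e => D e x y f) eps g.

Definition inD2 {X : Type} (D : R -> X -> X -> Y -> Y) (f : Y) : Prop :=
  inD1 D f /\ forall x y, exists d1 : R -> Y,
    (forall eps, 0 <= eps <= 1 -> deriv01 (fun e => D e x y f) eps (d1 eps)) /\
    (forall eps, 0 <= eps <= 1 -> exists g, deriv01 d1 eps g).

Definition derivJ1 (J : R -> Prop) (a : R -> Y1) (t : R) (a' : Y1) : Prop :=
  filterlim (fun h => scal (/ h) (minus (a (t + h)) (a t)))
    (within (fun h => J (t + h)) (locally' 0)) (locally a').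

Definition inDA' (J : R -> Prop) (iota : Y1 -> Y) G (A : R -> Y -> Y) (f : Y) : Prop :=
  exists a : R -> Y1,
    (forall t, J t -> in_gen_dom J G t f /\ A t f = iota (a t)) /\
    (forall t, J t -> exists a', derivJ1 J a t a').

(** paths of the Markov renewal process: T_0 = 0 < T_1 < ..., and
    N(r) = sup {n | T_n <= r} (finite) *)
Definition renewal_path (T : nat -> R) (N : R -> nat) : Prop :=
  T 0%nat = 0 /\ (forall n, T n < T (S n)) /\
  (forall r, 0 <= r -> T (N r) <= r /\ r < T (S (N r))).

Definition A0 {X : Type} (J : R -> Prop) (iota : Y1 -> Y)
  (G : X -> R -> R -> Y -> Y) (A : X -> R -> Y -> Y) (D : R -> X -> X -> Y -> Y)
  (T : nat -> R) : Prop :=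
  (forall f, inD1 D (iota f)) /\
  (forall x, regular J iota (G x) (A x)) /\
  (forall x f u, J u ->
               filterlim (fun v => A x v (iota f)) (within J (locally u))
                 (locally (A x u (iota f)))) /\
  (* (d) pathwise *) (exists taubar, 0 < taubar /\ forall n, T (S n) - T n <= taubar) /\
  (forall x s t f, J s -> J t -> s <= t -> norm (G x s t f) <= norm f) /\
            (forall eps x y f, 0 < eps <= 1 -> norm (D eps x y f) <= norm f) /\
  (forall x u, J u -> is_linear (fun f : Y1 => A x u (iota f))) /\
            (forall x, exists M, forall u (f : Y1), J u -> norm (A x u (iota f)) <= M * norm f) /\
  (forall f, (forall x, inDA' J iota (G x) (A x) f) ->
               exists M, forall x u (a : R -> Y1) a', J u ->
                 (forall t, J t -> A x t f = iota (a t)) -> derivJ1 J a u a' ->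
                 norm (iota a') <= M /\ norm (a u) <= M) /\
  (forall f, inD1 D f -> exists M, forall eps x y g, 0 <= eps <= 1 ->
               deriv01 (fun e => D e x y f) eps g -> norm g <= M) /\
  (forall f, inD2 D f -> exists M, forall x y (d1 : R -> Y) eps g,
               (forall e, 0 <= e <= 1 -> deriv01 (fun e' => D e' x y f) e (d1 e)) ->
               0 <= eps <= 1 -> deriv01 d1 eps g -> norm g <= M).

Definition Tk (T : nat -> R) (N : R -> nat) (s : R) (k : nat) : R :=
  match k with O => s | _ => T (N s + k)%nat end.
Definition xpath {X : Type} (xs : nat -> X) (N : R -> nat) (r : R) : X := xs (N r).
Definition xk {X : Type} (xs : nat -> X) (T : nat -> R) (N : R -> nat) (s : R) (k : nat) : X :=
  xpath xs N (Tk T N s k).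
Definition Teps (eps s r : R) : R := s + eps * (r - s).
Definition Nst (N : R -> nat) (s t : R) : nat := (N t - N s)%nat.

Fixpoint Vprod {X : Type} (G : X -> R -> R -> Y -> Y) (D : R -> X -> X -> Y -> Y)
  (xs : nat -> X) (T : nat -> R) (N : R -> nat) (eps s : R)
  (k m : nat) (tail : Y -> Y) (f : Y) : Y :=
  match m with
  | O => tail f
  | S m' => G (xk xs T N s k) (Teps eps s (Tk T N s k)) (Teps eps s (Tk T N s (S k)))
             (D eps (xk xs T N s k) (xk xs T N s (S k))
                (Vprod G D xs T N eps s (S k) m' tail f))
  end.

Definition Veps {X : Type} (G : X -> R -> R -> Y -> Y) (D : R -> X -> X -> Y -> Y)
  (xs : nat -> X) (T : nat -> R) (N : R -> nat) (eps s t : R) (f : Y) : Y :=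
  let n := Nst N s (Teps (/ eps) s t) in
  Vprod G D xs T N eps s 0 n
    (G (xpath xs N (Teps (/ eps) s t)) (Teps eps s (Tk T N s n)) t) f.

End Defs.

(* Main.v *)
Require Import Defs.
From Stdlib Require Import Reals List Lra Lia.
From Coquelicot Require Import Coquelicot.
Open Scope R_scope.

Lemma grp1 {G : AbelianGroup} (a b c d : G) :
  minus (plus a b) (plus c d) = plus (minus a c) (minus b d).
Proof.
  unfold minus. rewrite opp_plus. rewrite <- !plus_assoc. f_equal.
  rewrite (plus_comm b). rewrite <- !plus_assoc. f_equal. apply plus_comm.
Qed.

Lemma grp2 {G : AbelianGroup} (P Q Px S1 S2 : G) :
  minus (minus (plus P Q) Px) (plus S1 S2) = plus (minus (minus P Px) S1) (minus Q S2).
Proof.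
  rewrite <- grp1. f_equal. unfold minus. rewrite <- !plus_assoc. f_equal. apply plus_comm.
Qed.

Lemma clamp_facts a b x w : a <= b -> a <= x <= b ->
  a <= Rmax a (Rmin b w) <= b /\
  Rabs (Rmax a (Rmin b w) - x) <= Rabs (w - x) /\
  Rabs (w - Rmax a (Rmin b w)) <= Rabs (w - x).
Proof.
  intros Hab Hx. unfold Rmax, Rmin.
  destruct (Rle_dec b w); destruct (Rle_dec a _);
  repeat split; unfold Rabs; repeat destruct Rcase_abs; lra.
Qed.

Lemma scal_distr_R {V : NormedModule R_AbsRing} (x y : R) (u : V) :
  scal (x + y) u = plus (scal x u) (scal y u).
Proof. exact (scal_distr_r x y u). Qed.

Lemma ball_R (x y e : R) : ball x e y <-> Rabs (y - x) < e.
Proof. reflexivity. Qed.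

Lemma norm_R (x : R) : norm x = Rabs x.
Proof. reflexivity. Qed.

Lemma ftc_gen {V : CompleteNormedModule R_AbsRing} (phi psi : R -> V) a b : a <= b ->
 (forall v, a<=v<=b -> forall e:posreal, exists d:posreal, forall w, a<=w<=b -> Rabs (w-v) < d ->
     norm (minus (psi w) (psi v)) < e) ->
 (forall v, a<=v<=b -> forall e:posreal, exists d:posreal, forall w, a<=w<=b -> Rabs (w-v) < d ->
     norm (minus (minus (phi w) (phi v)) (scal (w-v) (psi v))) <= e * Rabs (w-v)) ->
 is_RInt psi a b (minus (phi b) (phi a)).
Proof.
  intros Hab Hc Hd.
  set (c := fun v => Rmax a (Rmin b v)).
  assert (Hcid : forall v, a <= v <= b -> c v = v).
  { intros v Hv; unfold c, Rmax, Rmin. destruct (Rle_dec b v); destruct (Rle_dec a _); lra. }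
  set (phi' := fun v => plus (phi (c v)) (scal (v - c v) (psi (c v)))).
  set (psi' := fun v => psi (c v)).
  assert (Hp : forall v, a <= v <= b -> phi' v = phi v).
  { intros v Hv. unfold phi'. rewrite Hcid by lra. replace (v - v) with 0 by ring.
    rewrite (scal_zero_l (K:=R_Ring) (psi v) : scal 0 (psi v) = zero). apply plus_zero_r. }
  apply is_RInt_ext with psi'.
  { intros v Hv. rewrite Rmin_left in Hv by lra. rewrite Rmax_right in Hv by lra.
    unfold psi'. rewrite Hcid by lra. reflexivity. }
  rewrite <- (Hp b) by lra. rewrite <- (Hp a) by lra.
  apply is_RInt_derive.
  - intros x Hx. rewrite Rmin_left in Hx by lra. rewrite Rmax_right in Hx by lra.
    split. apply is_linear_scal_l.
    intros y Hy. apply (@is_filter_lim_locally_unique _ R_NormedModule) in Hy. subst y.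
    intros e.
    assert (He2 : 0 < e / 2) by (destruct e; simpl; lra).
    destruct (Hc x Hx (mkposreal _ He2)) as [d1 Hd1].
    destruct (Hd x Hx (mkposreal _ He2)) as [d2 Hd2].
    assert (Hd3 : 0 < Rmin d1 d2) by (destruct d1; destruct d2; apply Rmin_glb_lt; simpl; lra).
    exists (mkposreal _ Hd3). intros y Hy. rewrite ball_R in Hy. simpl in Hy.
    destruct (clamp_facts a b x y Hab Hx) as [Hcy [Hcy1 Hcy2]].
    fold (c y) in Hcy, Hcy1, Hcy2.
    rewrite (Hp x Hx). unfold psi' at 1. rewrite (Hcid x Hx). unfold phi'.
    change (minus y x) with (y - x).
    replace (y - x) with (c y - x + (y - c y)) at 1 by (change plus with Rplus; simpl; ring).
    rewrite scal_distr_R. rewrite (@grp2 V). rewrite <- (@scal_minus_distr_l R_Ring V).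
    eapply Rle_trans. apply (@norm_triangle R_AbsRing V).
    assert (Hmin1 : Rmin d1 d2 <= d1) by apply Rmin_l.
    assert (Hmin2 : Rmin d1 d2 <= d2) by apply Rmin_r.
    specialize (Hd2 (c y) Hcy ltac:(simpl; lra)). simpl in Hd2.
    specialize (Hd1 (c y) Hcy ltac:(simpl; lra)). simpl in Hd1.
    eapply Rle_trans. apply Rplus_le_compat. apply Hd2. apply (@norm_scal R_AbsRing V).
    change (abs (y - c y)) with (Rabs (y - c y)). change (norm (y - x)) with (Rabs (y - x)).
    assert (0 <= norm (minus (psi (c y)) (psi x))) by apply norm_ge_0.
    assert (Rabs (y - c y) * norm (minus (psi (c y)) (psi x)) <= Rabs (y - x) * (e/2)).
    { apply Rmult_le_compat; try lra. apply Rabs_pos. }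
    assert (e / 2 * Rabs (c y - x) <= e/2 * Rabs (y - x)) by (apply Rmult_le_compat_l; lra).
    assert (Hfin : e / 2 * Rabs (c y - x) + Rabs (y - c y) * norm (minus (psi (c y)) (psi x)) <= e * Rabs (y - x)) by lra. exact Hfin.
  - intros x Hx. rewrite Rmin_left in Hx by lra. rewrite Rmax_right in Hx by lra.
    intros P [eps HP]. simpl in HP.
    destruct (Hc x Hx eps) as [d Hd1].
    exists d. intros y Hy. rewrite ball_R in Hy. apply HP.
    destruct (clamp_facts a b x y Hab Hx) as [Hcy [Hcy1 Hcy2]].
    fold (c y) in Hcy, Hcy1, Hcy2.
    unfold psi'. rewrite (Hcid x Hx).
    apply (@norm_compat1 R_AbsRing V). apply Hd1; auto. lra.
Qed.

Lemma grp4 {G : AbelianGroup} (x y z : G) : plus (minus x y) (minus y z) = minus x z.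
Proof.
  unfold minus. rewrite plus_assoc. f_equal. rewrite <- plus_assoc.
  rewrite plus_opp_l. apply plus_zero_r.
Qed.
Lemma grp6 {G : AbelianGroup} (a b C : G) : minus (minus a b) (opp C) = minus C (minus b a).
Proof.
  rewrite <- (opp_minus b a). unfold minus at 1. rewrite opp_opp. apply plus_comm.
Qed.
Lemma grp3 {G : AbelianGroup} (a b C K : G) :
  minus (minus a b) (opp C) = plus (opp (minus (minus b a) K)) (minus C K).
Proof.
  rewrite opp_minus, grp6, plus_comm. symmetry. apply grp4.
Qed.

Lemma lim_at_right_ed {V : NormedModule R_AbsRing} (q : R -> V) (D : R -> Prop) l :
  filterlim q (within D (at_right 0)) (locally l) ->
  forall e : posreal, exists d : posreal, forall h, 0 < h < d -> D h -> norm (minus (q h) l) < e.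
Proof.
  intros H e. apply (filterlim_locally_ball_norm (K:=R_AbsRing)) with (eps := e) in H.
  destruct H as [d Hd]. exists d. intros h Hh HD. apply Hd; auto.
  change (Rabs (h - 0) < d). rewrite Rminus_0_r, Rabs_right; lra. lra.
Qed.

Lemma lim_locally_ed {V : NormedModule R_AbsRing} (q : R -> V) (D : R -> Prop) u l :
  filterlim q (within D (locally u)) (locally l) ->
  forall e : posreal, exists d : posreal, forall w, Rabs (w - u) < d -> D w -> norm (minus (q w) l) < e.
Proof.
  intros H e. apply (filterlim_locally_ball_norm (K:=R_AbsRing)) with (eps := e) in H.
  destruct H as [d Hd]. exists d. intros w Hw HD. apply Hd; auto.
Qed.

Lemma scal_inv_cancel {V : NormedModule R_AbsRing} (h : R) (z : V) : h <> 0 ->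
  scal h (scal (/ h) z) = z.
Proof.
  intros Hh. rewrite scal_assoc. change (mult h (/h)) with (h * / h).
  rewrite Rinv_r by auto. exact (scal_one z).
Qed.

Section SG.
Context {Y : CompleteNormedModule R_AbsRing}.
Context (J : R -> Prop) (G : R -> R -> Y -> Y) (A : R -> Y -> Y).

Lemma sg_deriv (r b : R) (f : Y) :
 r <= b ->
 (forall u, r <= u <= b -> J u) ->
 (forall s t, J s -> J t -> s <= t -> is_linear (G s t)) ->
 (forall s m t y, J s -> J m -> J t -> s <= m -> m <= t -> G s m (G m t y) = G s t y) ->
 (forall s t y, J s -> J t -> s <= t -> norm (G s t y) <= norm y) ->
 (forall u, J u -> gen_lim J G u f (A u f)) ->
 (forall y u, J u -> r <= u -> filterlim (fun v => G r v y)
     (within (fun v => J v /\ r <= v) (locally u)) (locally (G r u y))) ->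
 (forall u, J u -> filterlim (fun v => A v f) (within J (locally u)) (locally (A u f))) ->
 (forall v, r<=v<=b -> forall e:posreal, exists d:posreal, forall w, r<=w<=b -> Rabs (w-v) < d ->
     norm (minus (G r w (A w f)) (G r v (A v f))) < e) /\
 (forall v, r<=v<=b -> forall e:posreal, exists d:posreal, forall w, r<=w<=b -> Rabs (w-v) < d ->
     norm (minus (minus (G r w f) (G r v f)) (scal (w-v) (G r v (A v f)))) <= e * Rabs (w-v)).
Proof.
  intros Hrb HJ Hlin Hsg Hc Hgen HGc HAc. split.
  - intros v Hv e.
    assert (He2 : 0 < e / 2) by (destruct e; simpl; lra).
    destruct (lim_locally_ed _ _ _ _ (HAc v (HJ v Hv)) (mkposreal _ He2)) as [d1 Hd1].
    destruct (lim_locally_ed _ _ _ _ (HGc (A v f) v (HJ v Hv) (proj1 Hv)) (mkposreal _ He2)) as [d2 Hd2].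
    assert (Hd3 : 0 < Rmin d1 d2) by (destruct d1; destruct d2; apply Rmin_glb_lt; simpl; lra).
    exists (mkposreal _ Hd3). intros w Hw Hwv. simpl in Hwv.
    assert (Hmin1 : Rmin d1 d2 <= d1) by apply Rmin_l.
    assert (Hmin2 : Rmin d1 d2 <= d2) by apply Rmin_r.
    rewrite <- (@grp4 Y _ (G r w (A v f))).
    rewrite <- (linear_minus (G r w)) by (apply Hlin; try apply HJ; lra).
    eapply Rle_lt_trans. apply (@norm_triangle R_AbsRing Y).
    assert (H1 : norm (G r w (minus (A w f) (A v f))) < e/2).
    { eapply Rle_lt_trans. apply Hc; try apply HJ; lra.
      apply (Hd1 w). lra. apply HJ; lra. }
    assert (H2 : norm (minus (G r w (A v f)) (G r v (A v f))) < e/2).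
    { apply (Hd2 w). lra. split. apply HJ; lra. lra. }
    eapply Rlt_le_trans; [apply Rplus_lt_compat; [exact H1|exact H2] | simpl; lra].
  - intros v Hv e.
    assert (He2 : 0 < e / 2) by (destruct e; simpl; lra).
    destruct (Hgen v (HJ v Hv)) as [Hright Hleft].
    destruct (lim_at_right_ed _ _ _ Hright e) as [d1 Hd1].
    destruct (lim_at_right_ed _ _ _ Hleft (mkposreal _ He2)) as [d2 Hd2].
    destruct (lim_locally_ed _ _ _ _ (HGc (A v f) v (HJ v Hv) (proj1 Hv)) (mkposreal _ He2)) as [d3 Hd3].
    assert (Hd4 : 0 < Rmin d1 (Rmin d2 d3)) by (destruct d1; destruct d2; destruct d3;
       apply Rmin_glb_lt; simpl; [lra|apply Rmin_glb_lt; lra]).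
    exists (mkposreal _ Hd4). intros w Hw Hwv. simpl in Hwv.
    assert (Hm1 : Rmin d1 (Rmin d2 d3) <= d1) by apply Rmin_l.
    assert (Hm2 : Rmin d1 (Rmin d2 d3) <= Rmin d2 d3) by apply Rmin_r.
    assert (Hm3 : Rmin d2 d3 <= d2) by apply Rmin_l.
    assert (Hm4 : Rmin d2 d3 <= d3) by apply Rmin_r.
    destruct (Rtotal_order w v) as [Hlt | [Heq | Hgt]].
    +
      rewrite Rabs_left in Hwv by lra.
      set (h := v - w).
      assert (Hh : 0 < h) by (unfold h; lra).
      assert (Ew : w = v - h) by (unfold h; lra).
      set (z := minus (minus (G w v f) f) (scal h (A v f))).
      assert (Hz : z = scal h (minus (scal (/ h) (minus (G (v - h) v f) f)) (A v f))).
      { rewrite (@scal_minus_distr_l R_Ring Y), (@scal_inv_cancel Y) by lra. unfold z. rewrite Ew. reflexivity. }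
      assert (HGz : G r w z = minus (minus (G r v f) (G r w f)) (scal h (G r w (A v f)))).
      { unfold z. rewrite !(linear_minus (G r w)) by (apply Hlin; auto; try apply HJ; lra).
        rewrite (linear_scal (G r w)) by (apply Hlin; auto; try apply HJ; lra).
        rewrite Hsg by (try apply HJ; lra). reflexivity. }
      replace (w - v) with (- h) by (unfold h; ring).
      rewrite (@scal_opp_l R_Ring Y h (G r v (A v f)) : scal (- h) (G r v (A v f)) = opp (scal h (G r v (A v f)))).
      rewrite (@grp3 Y _ _ _ (scal h (G r w (A v f)))).
      rewrite <- HGz. rewrite <- (@scal_minus_distr_l R_Ring Y).
      eapply Rle_trans. apply (@norm_triangle R_AbsRing Y).
      rewrite (@norm_opp R_AbsRing Y).
      assert (H1 : norm (G r w z) <= h * (e/2)).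
      { eapply Rle_trans. apply Hc; try apply HJ; lra.
        rewrite Hz. eapply Rle_trans. apply (@norm_scal R_AbsRing Y).
        change (abs h) with (Rabs h). rewrite Rabs_right by lra.
        apply Rmult_le_compat_l. lra. left. apply Hd2. lra. apply HJ; lra. }
      assert (H2 : norm (scal h (minus (G r v (A v f)) (G r w (A v f)))) <= h * (e/2)).
      { eapply Rle_trans. apply (@norm_scal R_AbsRing Y).
        change (abs h) with (Rabs h). rewrite Rabs_right by lra.
        apply Rmult_le_compat_l. lra. left.
        rewrite <- (@norm_opp R_AbsRing Y), opp_minus. apply Hd3. rewrite Rabs_left by lra; lra. split; [apply HJ|]; lra. }
      rewrite Rabs_left by lra. eapply Rle_trans; [apply Rplus_le_compat; [exact H1|exact H2]|]. unfold h; simpl; lra.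
    + subst w. rewrite minus_eq_zero. replace (v - v) with 0 by ring.
      rewrite (scal_zero_l (K:=R_Ring) (G r v (A v f)) : scal 0 (G r v (A v f)) = zero).
      rewrite minus_eq_zero. eapply Rle_trans. apply Req_le. apply (@norm_zero R_AbsRing Y). rewrite Rabs_R0; lra.
    +
      rewrite (Rabs_right (w - v)) in Hwv by lra.
      set (h := w - v).
      assert (Hh : 0 < h) by (unfold h; lra).
      assert (Ew : w = v + h) by (unfold h; lra).
      rewrite <- (Hsg r v w f) by (try apply HJ; lra).
      rewrite <- (linear_minus (G r v)) by (apply Hlin; try apply HJ; lra).
      rewrite <- (linear_scal (G r v)) by (apply Hlin; try apply HJ; lra).
      rewrite <- (linear_minus (G r v)) by (apply Hlin; try apply HJ; lra).
      eapply Rle_trans. apply Hc; try apply HJ; lra.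
      assert (Hq : minus (minus (G v w f) f) (scal h (A v f)) =
        scal h (minus (scal (/ h) (minus (G v (v + h) f) f)) (A v f))).
      { rewrite (@scal_minus_distr_l R_Ring Y), (@scal_inv_cancel Y) by lra. rewrite <- Ew. reflexivity. }
      eapply Rle_trans. { apply Req_le. apply f_equal. exact Hq. }
      eapply Rle_trans. apply (@norm_scal R_AbsRing Y).
      change (abs h) with (Rabs h). rewrite Rabs_right by lra.
      assert (Hq1 : norm (minus (scal (/ h) (minus (G v (v + h) f) f)) (A v f)) < e).
      { apply Hd1. lra. rewrite <- Ew. apply HJ; lra. }
      apply Rle_trans with (h * e). apply Rmult_le_compat_l; lra. right; ring.
Qed.

End SG.

Lemma grpM1 {G : AbelianGroup} (x y z : G) : minus x (plus y z) = minus (minus x y) z.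
Proof. unfold minus. rewrite (@opp_plus G). apply plus_assoc. Qed.
Lemma grpM2 {G : AbelianGroup} (x y z : G) : minus (minus x y) (minus x z) = minus z y.
Proof.
  unfold minus at 1. rewrite opp_minus. rewrite plus_comm. apply grp4.
Qed.
Lemma grp7 {G : AbelianGroup} (R Q B : G) : minus R (plus B (minus R Q)) = minus Q B.
Proof. rewrite grpM1. apply grpM2. Qed.
Lemma grp_mpc {G : AbelianGroup} (x y : G) : plus (minus x y) y = x.
Proof. unfold minus. rewrite <- plus_assoc, plus_opp_l. apply plus_zero_r. Qed.
Lemma grp8 {G : AbelianGroup} (V a S : G) : V = plus a (plus (minus V (plus a S)) S).
Proof. rewrite grpM1. rewrite (grp_mpc (minus V a) S). rewrite plus_comm. symmetry. apply grp_mpc. Qed.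

Lemma piece_ftc {Y : CompleteNormedModule R_AbsRing} (J : R -> Prop) (G : R -> R -> Y -> Y)
  (A : R -> Y -> Y) (P : Y -> Y) (r b : R) (f : Y) :
 r <= b ->
 (forall u, r <= u <= b -> J u) ->
 (forall s t, J s -> J t -> s <= t -> is_linear (G s t)) ->
 (forall s m t y, J s -> J m -> J t -> s <= m -> m <= t -> G s m (G m t y) = G s t y) ->
 (forall s t y, J s -> J t -> s <= t -> norm (G s t y) <= norm y) ->
 (forall u, J u -> gen_lim J G u f (A u f)) ->
 (forall y u, J u -> r <= u -> filterlim (fun v => G r v y)
     (within (fun v => J v /\ r <= v) (locally u)) (locally (G r u y))) ->
 (forall u, J u -> filterlim (fun v => A v f) (within J (locally u)) (locally (A u f))) ->
 G r r f = f ->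
 is_linear P -> (forall y, norm (P y) <= norm y) ->
 is_RInt (fun v => P (G r v (A v f))) r b (minus (P (G r b f)) (P f)).
Proof.
  intros Hrb HJ Hlin Hsg Hc Hgen HGc HAc Hid HPl HPc.
  destruct (sg_deriv J G A r b f Hrb HJ Hlin Hsg Hc Hgen HGc HAc) as [Hc1 Hd1].
  rewrite <- Hid at 2.
  apply (ftc_gen (fun v => P (G r v f)) (fun v => P (G r v (A v f))) r b Hrb).
  - intros v Hv e. destruct (Hc1 v Hv e) as [d Hd]. exists d. intros w Hw Hwv.
    rewrite <- (linear_minus P) by exact HPl.
    eapply Rle_lt_trans. apply HPc. apply Hd; auto.
  - intros v Hv e. destruct (Hd1 v Hv e) as [d Hd]. exists d. intros w Hw Hwv.
    rewrite <- (linear_scal P) by exact HPl.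
    rewrite <- !(linear_minus P) by exact HPl.
    eapply Rle_trans. apply HPc. apply Hd; auto.
Qed.

Section Comb.
Context (T : nat -> R) (N : R -> nat) (HT : renewal_path T N).

Lemma T_mono i j : (i <= j)%nat -> T i <= T j.
Proof.
  destruct HT as [_ [Hinc _]].
  induction j; intros Hij.
  - replace i with 0%nat by lia. lra.
  - destruct (Nat.eq_dec i (S j)) as [->|Hne]. lra.
    specialize (IHj ltac:(lia)). specialize (Hinc j). lra.
Qed.

Lemma T_lt i j : (i < j)%nat -> T i < T j.
Proof.
  intros Hij. destruct HT as [_ [Hinc _]].
  apply Rlt_le_trans with (T (S i)). apply Hinc. apply T_mono. lia.
Qed.

Lemma T_nonneg k : 0 <= T k.
Proof. destruct HT as [H0 _]. rewrite <- H0. apply T_mono. lia. Qed.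

Lemma N_char r m : 0 <= r -> T m <= r < T (S m) -> N r = m.
Proof.
  intros Hr [H1 H2]. destruct HT as [_ [_ HN]]. destruct (HN r Hr) as [H3 H4].
  destruct (Nat.lt_total (N r) m) as [Hlt|[Heq|Hgt]]; auto.
  - assert (T (S (N r)) <= T m) by (apply T_mono; lia). lra.
  - assert (T (S m) <= T (N r)) by (apply T_mono; lia). lra.
Qed.

Lemma N_T m : N (T m) = m.
Proof.
  apply N_char. apply T_nonneg. split. lra. apply T_lt. lia.
Qed.

Lemma N_mono r1 r2 : 0 <= r1 -> r1 <= r2 -> (N r1 <= N r2)%nat.
Proof.
  intros H0 H12. destruct HT as [_ [_ HN]].
  destruct (HN r1 H0) as [A1 B1]. destruct (HN r2 ltac:(lra)) as [A2 B2].
  destruct (Nat.le_gt_cases (N r1) (N r2)) as [|Hlt]; auto.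
  assert (T (S (N r2)) <= T (N r1)) by (apply T_mono; lia). lra.
Qed.

Context (s : R) (Hs0 : 0 <= s).

Lemma Tk_S m : Tk T N s (S m) = T (N s + S m)%nat.
Proof. reflexivity. Qed.

Lemma Tk_low m : T (N s + m)%nat <= Tk T N s m.
Proof.
  destruct m. simpl. rewrite Nat.add_0_r. destruct HT as [_ [_ HN]]. apply (HN s Hs0).
  simpl. lra.
Qed.

Lemma Tk_lt m : Tk T N s m < Tk T N s (S m).
Proof.
  destruct m.
  - rewrite Tk_S. simpl. destruct HT as [_ [_ HN]]. destruct (HN s Hs0) as [_ H].
    rewrite Nat.add_1_r. exact H.
  - rewrite !Tk_S. apply T_lt. lia.
Qed.

Lemma Tk_mono i j : (i <= j)%nat -> Tk T N s i <= Tk T N s j.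
Proof.
  induction j; intros Hij.
  - replace i with 0%nat by lia. lra.
  - destruct (Nat.eq_dec i (S j)) as [->|Hne]. lra.
    specialize (IHj ltac:(lia)). pose proof (Tk_lt j). lra.
Qed.

Lemma Tk_ge m : s <= Tk T N s m.
Proof. apply (Tk_mono 0 m). lia. Qed.

Context (eps : R) (Heps : 0 < eps).

Lemma Teps_le a b : a <= b <-> Teps eps s a <= Teps eps s b.
Proof. unfold Teps. split; intros; nra. Qed.
Lemma Teps_lt a b : a < b <-> Teps eps s a < Teps eps s b.
Proof. unfold Teps. split; intros; nra. Qed.
Lemma Teps_inv u : Teps eps s (Teps (/ eps) s u) = u.
Proof. unfold Teps. field. lra. Qed.
Lemma Teps_s : Teps eps s s = s.
Proof. unfold Teps. ring. Qed.

Definition tau k := Teps eps s (Tk T N s k).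
Definition nu u := Nst N s (Teps (/ eps) s u).

Lemma tau_lt m : tau m < tau (S m).
Proof. unfold tau. apply (proj1 (Teps_lt _ _)). apply Tk_lt. Qed.
Lemma tau_mono i j : (i <= j)%nat -> tau i <= tau j.
Proof. intros; unfold tau. apply (proj1 (Teps_le _ _)). apply Tk_mono. auto. Qed.
Lemma tau0 : tau 0 = s.
Proof. unfold tau. simpl. apply Teps_s. Qed.
Lemma tau_ge m : s <= tau m.
Proof. rewrite <- tau0. apply tau_mono. lia. Qed.

Lemma u'_ge u : s <= u -> s <= Teps (/ eps) s u.
Proof.
  intros H. unfold Teps. assert (0 < / eps) by (apply Rinv_0_lt_compat; lra). nra.
Qed.

Lemma nu_N u : s <= u -> (N s + nu u)%nat = N (Teps (/ eps) s u).
Proof.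
  intros H. unfold nu, Nst. pose proof (N_mono s (Teps (/eps) s u) Hs0 (u'_ge u H)). lia.
Qed.

Lemma nu_spec u : s <= u -> tau (nu u) <= u < tau (S (nu u)).
Proof.
  intros H. pose proof (nu_N u H) as HN'. set (u' := Teps (/eps) s u) in *.
  assert (Hu' : 0 <= u') by (pose proof (u'_ge u H); unfold u' in *; lra).
  destruct HT as [_ [_ HN]]. destruct (HN u' Hu') as [H1 H2].
  remember (nu u) as k. rewrite <- (Teps_inv u). fold u'. unfold tau. split.
  - apply (proj1 (Teps_le _ _)). destruct k.
    + simpl. apply u'_ge. auto.
    + rewrite Tk_S. rewrite HN'. auto.
  - apply (proj1 (Teps_lt _ _)). rewrite Tk_S. replace (N s + S k)%nat with (S (N u')) by lia. auto.
Qed.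

Lemma nu_eq u m : tau m <= u < tau (S m) -> nu u = m.
Proof.
  intros [H1 H2].
  assert (Hsu : s <= u) by (pose proof (tau_ge m); lra).
  pose proof (nu_N u Hsu) as HN'. set (u' := Teps (/eps) s u) in *.
  assert (Hu' : 0 <= u') by (pose proof (u'_ge u Hsu); unfold u' in *; lra).
  unfold tau in H1, H2. rewrite <- (Teps_inv u) in H1, H2. fold u' in H1, H2.
  apply (proj2 (Teps_le _ _)) in H1. apply (proj2 (Teps_lt _ _)) in H2. rewrite Tk_S in H2.
  pose proof (Tk_low m).
  assert (N u' = N s + m)%nat.
  { apply N_char. auto. split. lra. replace (S (N s + m)) with (N s + S m)%nat by lia. auto. }
  lia.
Qed.

Lemma xpath_eq {X : Type} (xs : nat -> X) u : s <= u ->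
  xpath xs N (Teps (/ eps) s u) = xk xs T N s (nu u).
Proof.
  intros H. unfold xpath, xk. rewrite <- (nu_N u H).
  destruct (nu u); unfold xpath. rewrite Nat.add_0_r. reflexivity. rewrite Tk_S, N_T. reflexivity.
Qed.

End Comb.

Section Main.
Context {Y : CompleteNormedModule R_AbsRing} {X : Type}
 (J : R -> Prop) (G : X -> R -> R -> Y -> Y) (A : X -> R -> Y -> Y) (D : R -> X -> X -> Y -> Y)
 (xs : nat -> X) (T : nat -> R) (N : R -> nat) (eps s t : R) (f0 : Y).
Context (HT : renewal_path T N) (Hs0 : 0 <= s) (Hst : s <= t) (Heps : 0 < eps)
 (HJ : forall u, s <= u <= t -> J u)
 (HGlin : forall x a b, J a -> J b -> a <= b -> is_linear (G x a b))
 (Hsg : forall x a m b y, J a -> J m -> J b -> a <= m -> m <= b -> G x a m (G x m b y) = G x a b y)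
 (Hid : forall x a y, J a -> G x a a y = y)
 (HGc : forall x a b y, J a -> J b -> a <= b -> norm (G x a b y) <= norm y)
 (HDlin : forall x y, is_linear (D eps x y))
 (HDc : forall x y z, norm (D eps x y z) <= norm z)
 (Hgen : forall x u, J u -> gen_lim J (G x) u f0 (A x u f0))
 (HGcont : forall x r y u, J r -> J u -> r <= u -> filterlim (fun v => G x r v y)
     (within (fun v => J v /\ r <= v) (locally u)) (locally (G x r u y)))
 (HAc : forall x u, J u -> filterlim (fun v => A x v f0) (within J (locally u)) (locally (A x u f0))).

Definition xx k := xk xs T N s k.
Definition tt k := tau T N s eps k.
Definition FF k y := G (xx k) (tt k) (tt (S k)) (D eps (xx k) (xx (S k)) y).
Definition PP m := Vprod G D xs T N eps s 0 m (fun y => y).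

Lemma Vprod_tail k m tail y :
  Vprod G D xs T N eps s k m tail y = Vprod G D xs T N eps s k m (fun z => z) (tail y).
Proof.
  revert k. induction m; intros k; simpl. reflexivity. rewrite IHm. reflexivity.
Qed.

Lemma Vprod_snoc k m y :
  Vprod G D xs T N eps s k (S m) (fun z => z) y = Vprod G D xs T N eps s k m (fun z => z) (FF (k + m) y).
Proof.
  revert k. induction m; intros k.
  - simpl. rewrite Nat.add_0_r. reflexivity.
  - change (Vprod G D xs T N eps s k (S (S m)) (fun z => z) y) with
      (G (xk xs T N s k) (Teps eps s (Tk T N s k)) (Teps eps s (Tk T N s (S k)))
             (D eps (xk xs T N s k) (xk xs T N s (S k))
                (Vprod G D xs T N eps s (S k) (S m) (fun z => z) y))).
    rewrite IHm. simpl. replace (k + S m)%nat with (S k + m)%nat by lia. reflexivity.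
Qed.

Lemma tt_J k : tt k <= t -> J (tt k).
Proof. intros H. apply HJ. split; auto. apply tau_ge; auto. Qed.

Lemma Vprod_lin k m : tt (k + m) <= t ->
  is_linear (Vprod G D xs T N eps s k m (fun z => z)) /\
  forall y, norm (Vprod G D xs T N eps s k m (fun z => z) y) <= norm y.
Proof.
  revert k. induction m; intros k Hk.
  - simpl. split. apply is_linear_id. intros; lra.
  - assert (Hk1 : tt (S k) <= tt (k + S m)) by (apply tau_mono; auto; lia).
    assert (Hk0 : tt k <= tt (S k)) by (apply tau_mono; auto; lia).
    assert (Jk : J (tt k)) by (apply tt_J; lra).
    assert (Jk1 : J (tt (S k))) by (apply tt_J; lra).
    destruct (IHm (S k)) as [IH1 IH2]. replace (S k + m)%nat with (k + S m)%nat by lia. auto.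
    split.
    + apply is_linear_comp with (l1 := Vprod G D xs T N eps s (S k) m (fun z => z))
        (l2 := fun z => G (xx k) (tt k) (tt (S k)) (D eps (xx k) (xx (S k)) z)); auto.
      apply is_linear_comp; auto.
    + intros y. simpl. eapply Rle_trans. apply HGc; auto.
      eapply Rle_trans. apply HDc. apply IH2.
Qed.

Lemma PP_lin m : tt m <= t -> is_linear (PP m) /\ forall y, norm (PP m y) <= norm y.
Proof. intros H. apply Vprod_lin. simpl. auto. Qed.

Lemma Veps_eq u y : s <= u ->
  Veps G D xs T N eps s u y = PP (nu N s eps u) (G (xx (nu N s eps u)) (tt (nu N s eps u)) u y).
Proof.
  intros H. unfold Veps. cbv zeta. rewrite Vprod_tail. rewrite (xpath_eq T N HT s Hs0 eps Heps xs u H).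
  reflexivity.
Qed.

Definition gg u := Veps G D xs T N eps s u (A (xpath xs N (Teps (/ eps) s u)) u f0).

Lemma piece m u : tt m <= u -> u <= tt (S m) -> u <= t ->
  is_RInt gg (tt m) u (minus (PP m (G (xx m) (tt m) u f0)) (PP m f0)).
Proof.
  intros H1 H2 H3.
  assert (Hsm : s <= tt m) by (apply tau_ge; auto).
  apply is_RInt_ext with (fun v => PP m (G (xx m) (tt m) v (A (xx m) v f0))).
  { intros v Hv. rewrite Rmin_left in Hv by lra. rewrite Rmax_right in Hv by lra.
    unfold gg. rewrite Veps_eq by lra. rewrite (xpath_eq T N HT s Hs0 eps Heps xs v) by lra.
    rewrite (nu_eq T N HT s Hs0 eps Heps v m) by (unfold tt in *; lra). reflexivity. }
  destruct (PP_lin m ltac:(lra)) as [HPl HPc].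
  refine (piece_ftc J (G (xx m)) (A (xx m)) (PP m) (tt m) u f0 H1 _ _ _ _ _ _ _ _ HPl HPc).
  - intros w Hw. apply HJ. lra.
  - intros a b Ha Hb Hab. apply HGlin; auto.
  - intros a b c y Ha Hb Hc Hab Hbc. apply Hsg; auto.
  - intros a b y Ha Hb Hab. apply HGc; auto.
  - apply Hgen.
  - intros y w Jw Hw. apply HGcont; auto. apply HJ; lra.
  - apply HAc.
  - apply Hid. apply HJ; lra.
Qed.


Definition LL k := PP (k - 1) (G (xx (k - 1)) (tt (k - 1)) (tt k)
   (minus (D eps (xx (k - 1)) (xx k) f0) f0)).

Lemma L_lim k : (1 <= k)%nat -> tt k <= t ->
  filterlim (fun u => Veps G D xs T N eps s u (minus (D eps (xx (k - 1)) (xx k) f0) f0))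
    (at_left (tt k)) (locally (LL k)).
Proof.
  intros Hk Hkt. destruct k as [|j]; [lia|].
  unfold LL. replace (S j - 1)%nat with j by lia.
  set (y := minus (D eps (xx j) (xx (S j)) f0) f0).
  pose proof (tau_lt T N HT s Hs0 eps Heps j) as Hlt. fold (tt j) (tt (S j)) in Hlt.
  pose proof (tau_ge T N HT s Hs0 eps Heps j) as Hge. fold (tt j) in Hge.
  destruct (PP_lin j ltac:(lra)) as [HPl HPc].
  apply (proj2 (filterlim_locally_ball_norm (K := R_AbsRing) (U := Y) _ _)). intros e.
  destruct (lim_locally_ed _ _ _ _ (HGcont (xx j) (tt j) y (tt (S j)) (tt_J j ltac:(lra))
      (tt_J (S j) Hkt) ltac:(lra)) e) as [d Hd].
  assert (Hd' : 0 < Rmin d (tt (S j) - tt j)) by (destruct d; apply Rmin_glb_lt; simpl; lra).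
  exists (mkposreal _ Hd'). intros u Hu Hu2. simpl in Hu. change (Rabs (u - tt (S j)) < Rmin d (tt (S j) - tt j)) in Hu.
  assert (Hm1 : Rmin d (tt (S j) - tt j) <= d) by apply Rmin_l.
  assert (Hm2 : Rmin d (tt (S j) - tt j) <= tt (S j) - tt j) by apply Rmin_r.
  rewrite Rabs_left in Hu by lra.
  rewrite Veps_eq by lra.
  rewrite (nu_eq T N HT s Hs0 eps Heps u j) by (unfold tt in *; lra).
  unfold ball_norm. rewrite <- (linear_minus (PP j)) by exact HPl.
  eapply Rle_lt_trans. apply HPc. apply Hd.
  rewrite Rabs_left by lra. lra. split. apply HJ; lra. lra.
Qed.

Lemma inv m : tt m <= t -> is_RInt gg s (tt m) (minus (PP m f0) (plus f0 (sum_n_m LL 1 m))).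
Proof.
  induction m; intros Hm.
  - unfold tt. rewrite (tau0 T N s eps). rewrite sum_n_m_zero by lia.
    change (PP 0 f0) with f0. rewrite plus_zero_r, minus_eq_zero. exact (is_RInt_point (V := Y) gg s).
  - pose proof (tau_lt T N HT s Hs0 eps Heps m) as Hlt. fold (tt m) (tt (S m)) in Hlt.
    specialize (IHm ltac:(lra)).
    pose proof (piece m (tt (S m)) ltac:(lra) ltac:(lra) Hm) as Hp.
    pose proof (is_RInt_Chasles _ _ _ _ _ _ IHm Hp) as Hc.
    destruct (PP_lin m ltac:(lra)) as [HPl HPc].
    assert (Jm : J (tt m)) by (apply tt_J; lra).
    assert (Jm1 : J (tt (S m))) by (apply tt_J; lra).
    assert (HGl : is_linear (G (xx m) (tt m) (tt (S m)))) by (apply HGlin; auto; lra).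
    assert (E : plus (minus (PP m f0) (plus f0 (sum_n_m LL 1 m)))
                 (minus (PP m (G (xx m) (tt m) (tt (S m)) f0)) (PP m f0)) =
               minus (PP (S m) f0) (plus f0 (sum_n_m LL 1 (S m)))).
    { rewrite plus_comm, grp4. rewrite sum_n_Sm by lia. rewrite plus_assoc.
      unfold LL. replace (S m - 1)%nat with m by lia.
      rewrite (linear_minus (G (xx m) (tt m) (tt (S m)))) by exact HGl.
      rewrite (linear_minus (PP m)) by exact HPl.
      unfold PP at 3. rewrite Vprod_snoc. simpl (0 + m)%nat. unfold FF. fold (PP m).
      symmetry. exact (@grp7 Y _ _ _). }
    rewrite <- E. exact Hc.
Qed.

Lemma final : is_RInt gg s t (minus (Veps G D xs T N eps s t f0)
   (plus f0 (sum_n_m LL 1 (nu N s eps t)))).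
Proof.
  set (n := nu N s eps t).
  pose proof (nu_spec T N HT s Hs0 eps Heps t Hst) as [H1 H2]. fold n in H1, H2.
  fold (tt n) in H1. fold (tt (S n)) in H2.
  pose proof (inv n H1) as Hi.
  pose proof (piece n t H1 ltac:(lra) ltac:(lra)) as Hp.
  pose proof (is_RInt_Chasles _ _ _ _ _ _ Hi Hp) as Hc.
  rewrite Veps_eq by lra. fold n.
  assert (E : forall a b c : Y, plus (minus a b) (minus c a) = minus c b).
  { intros a b c. rewrite plus_comm. exact (@grp4 Y _ _ _). }
  rewrite E in Hc. exact Hc.
Qed.

End Main.

Theorem lemma4p10 (Y Y1 : CompleteNormedModule R_AbsRing) (iota : Y1 -> Y)
  (J : R -> Prop) (X : Type)
  (G : X -> R -> R -> Y -> Y) (A : X -> R -> Y -> Y) (D : R -> X -> X -> Y -> Y)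
  (xs : nat -> X) (T : nat -> R) (N : R -> nat) :
  separable Y -> separable Y1 -> cont_embedding iota -> time_domain J ->
  (exists l : list X, forall x, In x l) ->
  (forall x, inhom_semigroup J (G x)) ->
  (forall x, is_generator J (G x) (A x)) ->
  (forall x y f, D 0 x y f = f) ->
  (forall eps x y, 0 < eps <= 1 -> is_linear (D eps x y)) ->
  renewal_path T N ->
  A0 J iota G A D T ->
  forall s t, J s -> J t -> s <= t -> forall (f : Y1) (eps : R), 0 < eps <= 1 ->
  let g := fun u => Veps G D xs T N eps s u
                      (A (xpath xs N (Teps (/ eps) s u)) u (iota f)) in
  let n := Nst N s (Teps (/ eps) s t) in
  ex_RInt g s t /\
  exists L : nat -> Y,
    (forall k, (1 <= k <= n)%nat ->
       filterlim (fun u => Veps G D xs T N eps s u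
                    (minus (D eps (xk xs T N s (k - 1)) (xk xs T N s k) (iota f)) (iota f)))
         (at_left (Teps eps s (Tk T N s k))) (locally (L k))) /\
    Veps G D xs T N eps s t (iota f) = plus (iota f) (plus (RInt g s t) (sum_n_m L 1 n)).
Proof.
  intros _ _ _ Htd _ HSG Hgen_is _ HDlin HT HA0 s t Js Jt Hst f eps Heps g n.
  destruct HA0 as [_ [Hb [Hc [_ [He1 [He2 _]]]]]].
  assert (Hs0 : 0 <= s).
  { destruct Htd as [H | [Tinf [_ H]]]; apply H in Js; lra. }
  assert (HJ : forall u, s <= u <= t -> J u).
  { intros u Hu. destruct Htd as [H | [Tinf [_ H]]].
    - apply H. apply H in Js. lra.
    - apply H. apply H in Js. apply H in Jt. lra. }
  assert (Heps0 : 0 < eps) by lra.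
  assert (HGlin : forall x a b, J a -> J b -> a <= b -> is_linear (G x a b)).
  { intros x. apply (proj1 (HSG x)). }
  assert (Hsg : forall x a m b y, J a -> J m -> J b -> a <= m -> m <= b ->
             G x a m (G x m b y) = G x a b y).
  { intros x. apply (proj2 (proj2 (HSG x))). }
  assert (Hid : forall x a y, J a -> G x a a y = y).
  { intros x. apply (proj1 (proj2 (HSG x))). }
  assert (HDl : forall x y, is_linear (D eps x y)) by (intros; apply HDlin; auto).
  assert (HDc : forall x y z, norm (D eps x y z) <= norm z) by (intros; apply He2; auto).
  assert (Hgen : forall x u, J u -> gen_lim J (G x) u (iota f) (A x u (iota f))).
  { intros x u Ju. destruct (Hb x) as [Hdom _]. destruct (Hdom u f Ju) as [gl Hgl].
    rewrite (Hgen_is x u (iota f) gl Ju Hgl). exact Hgl. }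
  assert (HGcont : forall x r y u, J r -> J u -> r <= u -> filterlim (fun v => G x r v y)
     (within (fun v => J v /\ r <= v) (locally u)) (locally (G x r u y))).
  { intros x r y u Jr Ju Hru. destruct (Hb x) as [_ [_ [_ [H4 _]]]]. apply H4; auto. }
  assert (HAc : forall x u, J u -> filterlim (fun v => A x v (iota f)) (within J (locally u))
      (locally (A x u (iota f)))).
  { intros x u Ju. apply Hc; auto. }
  pose proof (final J G A D xs T N eps s t (iota f) HT Hs0 Hst Heps0 HJ HGlin Hsg Hid He1
                HDl HDc Hgen HGcont HAc) as Hfin.
  split.
  - eexists. exact Hfin.
  - exists (LL G D xs T N eps s (iota f)). split.
    + intros k Hk.
      pose proof (nu_spec T N HT s Hs0 eps Heps0 t Hst) as [H1 _].
      apply (L_lim J G D xs T N eps s t (iota f) HT Hs0 Heps0 HJ HGlin He1 HDl HDc HGcont k).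
      lia. apply Rle_trans with (tau T N s eps (nu N s eps t)); auto.
      apply tau_mono; auto. unfold n in Hk. unfold nu. lia.
    + change (RInt g s t) with (RInt (gg G A D xs T N eps s (iota f)) s t).
      rewrite (is_RInt_unique _ _ _ _ Hfin).
      exact (@grp8 Y _ _ _).
Qed.
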